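(* Let $\mathrm{tHC}$ be the twisted associative algebra generated by $S_t$-invariant elements $\mathsf m^{2p}_{\underline t}$ of arity $t\geqslant1$ and homological degree $2p$, for all $t\geqslant1$ and $p\geqslant0$, with $\overline{\mathsf m}_I=\sum_{p\geqslant0}\mathsf m^{2p}_I$, subject to the relations \[ \sum_{\substack{\underline n=I\sqcup J\\ i\in I,\ j\in J}}\overline{\mathsf m}_I\overline{\mathsf m}_J=\sum_{\substack{\underline n=I\sqcup J\\ i\in I,\ j\in J}}\overline{\mathsf m}_J\overline{\mathsf m}_I\qquad(n\geqslant2,\ i\neq j\in\underline n), \] understood homological degree by homological degree. Then for every $n\geqslant1$, each of the two elements \[ \sum_{\substack{I\sqcup J=\underline n\\ j\in J}}\overline{\mathsf m}_I\overline{\mathsf m}_J,\qquad \sum_{\substack{I\sqcup J=\underline n\\ j\in J}}\overline{\mathsf m}_J\overline{\mathsf m}_I \] (sums over decompositions into nonempty $I,J$, taken degree by degree) is independent of the choice of $j\in\underline n$.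
   Context: Work over a field $\Bbbk$ of characteristic zero, homologically graded vector spaces; $\underline n=\{1,\dots,n\}$. A twisted associative algebra is a species with natural associative unital products $\mathcal A(J)\otimes\mathcal A(K)\to\mathcal A(J\sqcup K)$; $\mathsf x_I$ is the relabeling of an $S_t$-invariant element of arity $t$ to a $t$-element set $I$; relations are imposed with all relabelings. Since $\overline{\mathsf m}_t$ is an infinite sum of elements of different degrees, each identity involving these sums is to be read as the family of identities obtained by separating the terms by total homological degree (each involving finitely many terms). *)

(* Defs.v *)
From mathcomp Require Import all_boot all_order all_algebra.
Set Implicit Arguments. Unset Strict Implicit. Unset Printing Implicit Defensive.
Import GRing.Theory.
Local Open Scope ring_scope.

(* Model of the free twisted associative algebra on the S_t-invariant
   generators m^{2p}_t, evaluated on the finite set 'I_n (= {0,..,n-1},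
   standing for the set underline n = {1,..,n}) and on its subsets.
   A basis monomial m^{2p_1}_{I_1} ... m^{2p_k}_{I_k} is a word: the list of
   pairs (I_l, p_l).  Elements of the free algebra are given by their
   coefficient functions on words (all elements occurring are finitely
   supported), with product the concatenation (convolution) product. *)

Definition word (n : nat) := seq ({set 'I_n} * nat).

Section FreeTAA.
Variables (F : fieldType) (n : nat).

Definition elt := word n -> F.

Definition mono (s : word n) : elt := fun w => (w == s)%:R.

Definition eadd (x y : elt) : elt := fun w => x w + y w.
Definition esub (x y : elt) : elt := fun w => x w - y w.
Definition escale (c : F) (x : elt) : elt := fun w => c * x w.
Definition ezero : elt := fun _ => 0.

Definition emul (x y : elt) : elt :=
  fun w => \sum_(i < (size w).+1) x (take i w) * y (drop i w).

(* a word w is a monomial of arity S: its blocks are nonempty, pairwise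
   disjoint and cover S *)
Definition wordon (S : {set 'I_n}) (w : word n) : bool :=
  all (fun b => b.1 != set0) w &&
  ((\sum_(b <- w) #|b.1|)%N == #|S|) &&
  (\bigcup_(b <- w) b.1 == S).

(* homogeneous component (half homological degree d, i.e. homological degree
   2d) of  sum_{N = I u J, i in I, j in J} (mbar_I mbar_J - mbar_J mbar_I),
   the defining relation relabeled to the subset N. *)
Definition rel (N : {set 'I_n}) (i j : 'I_n) (d : nat) : elt :=
  fun w => \sum_(I : {set 'I_n}) \sum_(J : {set 'I_n})
     if [&& I :|: J == N, [disjoint I & J], i \in I & j \in J] then
       \sum_(p < d.+1)
         esub (emul (mono [:: (I, val p)]) (mono [:: (J, (d - p)%N)]))
              (emul (mono [:: (J, (d - p)%N)]) (mono [:: (I, val p)])) w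
     else 0.

(* a generator of the two-sided ideal in arity 'I_n:  u . r . v  with u a
   monomial of arity K1, r a relation of arity N, v a monomial of arity K2,
   and K1, N, K2 a decomposition of 'I_n *)
Definition ideal_gen (u : word n) (N : {set 'I_n}) (i j : 'I_n) (d : nat)
  (v : word n) : Prop :=
  (i != j) /\ i \in N /\ j \in N /\
  exists K1 K2 : {set 'I_n},
    [/\ wordon K1 u, wordon K2 v, [disjoint K1 & N], [disjoint K2 & N]
        & [disjoint K1 & K2]] /\ K1 :|: N :|: K2 = setT.

Definition in_ideal (x : elt) : Prop :=
  exists l : seq (F * word n * {set 'I_n} * 'I_n * 'I_n * nat * word n),
    (forall t, t \in l ->
       let: (c, u, N, i, j, d, v) := t in ideal_gen u N i j d v) /\
    forall w, x w = \sum_(t <- l)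
       let: (c, u, N, i, j, d, v) := t in
       escale c (emul (emul (mono u) (rel N i j d)) (mono v)) w.

Definition Xelt (j : 'I_n) (d : nat) : elt :=
  fun w => \sum_(I : {set 'I_n}) \sum_(J : {set 'I_n})
     if [&& I :|: J == setT, [disjoint I & J], I != set0 & j \in J] then
       \sum_(p < d.+1) emul (mono [:: (I, val p)]) (mono [:: (J, (d - p)%N)]) w
     else 0.

Definition Yelt (j : 'I_n) (d : nat) : elt :=
  fun w => \sum_(I : {set 'I_n}) \sum_(J : {set 'I_n})
     if [&& I :|: J == setT, [disjoint I & J], I != set0 & j \in J] then
       \sum_(p < d.+1) emul (mono [:: (J, (d - p)%N)]) (mono [:: (I, val p)]) w
     else 0.

End FreeTAA.

(* Main.v *)
Require Import Defs.
From mathcomp Require Import all_boot all_order all_algebra.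
Set Implicit Arguments. Unset Strict Implicit. Unset Printing Implicit Defensive.
Import GRing.Theory.
Local Open Scope ring_scope.

Section Aux.
Variables (F : fieldType) (n : nat).

Lemma emul_nil_l (x : elt F n) w : emul (@mono F n [::]) x w = x w.
Proof.
rewrite /emul big_ord_recl /= take0 drop0 /mono eqxx mul1r big1 ?addr0 //.
move=> i _; case: w i => [|a w] i; first by case: i.
by rewrite /= mul0r.
Qed.

Lemma emul_nil_r (x : elt F n) w : emul x (@mono F n [::]) w = x w.
Proof.
rewrite /emul big_ord_recr /= take_size drop_size /mono eqxx mulr1 big1 ?add0r //.
move=> i _; have -> : (drop i w == [::]) = false.
  apply/eqP => /(congr1 size); rewrite size_drop /= => /eqP.
  by rewrite subn_eq0 leqNgt ltn_ord.
by rewrite mulr0.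
Qed.

Definition P (I J : {set 'I_n}) := (I :|: J == setT) && [disjoint I & J].

Lemma ifB (c : bool) (a b : F) :
  (if c then a - b else 0) = (if c then a else 0) - (if c then b else 0).
Proof. by case: c; rewrite ?subr0. Qed.

Lemma compl_of (I J : {set 'I_n}) : I :|: J = setT -> [disjoint I & J] ->
  forall x, (x \in J) = (x \notin I).
Proof.
move=> U D x; have := disjoint_setI0 D => /setP /(_ x).
have /setP /(_ x) := U.
rewrite !inE; case: (x \in I); case: (x \in J) => //.
Qed.

Lemma keyA (f : {set 'I_n} -> {set 'I_n} -> F) (j k : 'I_n) :
  \sum_I \sum_J (if [&& I :|: J == setT, [disjoint I & J], I != set0 & j \in J]
                 then f I J else 0)
  - \sum_I \sum_J (if [&& I :|: J == setT, [disjoint I & J], I != set0 & k \in J]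
                 then f I J else 0)
  = \sum_I \sum_J (if [&& I :|: J == setT, [disjoint I & J], k \in I & j \in J]
                 then f I J else 0)
  - \sum_I \sum_J (if [&& I :|: J == setT, [disjoint I & J], j \in I & k \in J]
                 then f I J else 0).
Proof.
rewrite -!sumrB; apply: eq_bigr => I _; rewrite -!sumrB; apply: eq_bigr => J _.
case: (eqVneq (I :|: J) setT) => [U|U] /=; last by rewrite subrr.
case: (boolP [disjoint I & J]) => D /=; last by rewrite subrr.
rewrite !(compl_of U D).
have ne : forall x, x \in I -> (I != set0) = true.
  by move=> x xI; apply/set0Pn; exists x.
case jI: (j \in I); case kI: (k \in I) => /=;
  rewrite ?subrr ?subr0 ?sub0r //.
- by rewrite (ne j jI) andbF andbT sub0r.
- by rewrite (ne k kI) andbF andbT subr0.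
Qed.

Lemma swapS (f : {set 'I_n} -> {set 'I_n} -> F) (a b : 'I_n) :
  \sum_I \sum_J (if [&& I :|: J == setT, [disjoint I & J], a \in I & b \in J]
                 then f J I else 0)
  = \sum_I \sum_J (if [&& I :|: J == setT, [disjoint I & J], b \in I & a \in J]
                 then f I J else 0).
Proof.
rewrite exchange_big; apply: eq_bigr => I _; apply: eq_bigr => J _.
by rewrite setUC disjoint_sym (andbC (a \in J)).
Qed.

End Aux.


Section Main.
Variables (F : fieldType) (n : nat) (d : nat).

Definition fw (w : word n) (I J : {set 'I_n}) : F :=
  \sum_(p < d.+1) emul (@mono F n [:: (I, val p)]) (@mono F n [:: (J, (d - p)%N)]) w.

Lemma revsum w I J :
  \sum_(p < d.+1) emul (@mono F n [:: (J, (d - p)%N)]) (@mono F n [:: (I, val p)]) w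
  = fw w J I.
Proof.
rewrite /fw (reindex_inj rev_ord_inj); apply: eq_bigr => p _ /=.
by rewrite subSS subKn // -ltnS.
Qed.

Lemma rel_eq N i j w :
  @Defs.rel F n N i j d w =
  \sum_I \sum_J (if [&& I :|: J == N, [disjoint I & J], i \in I & j \in J]
                 then fw w I J else 0)
  - \sum_I \sum_J (if [&& I :|: J == N, [disjoint I & J], i \in I & j \in J]
                 then fw w J I else 0).
Proof.
rewrite /Defs.rel -!sumrB; apply: eq_bigr => I _; rewrite -!sumrB; apply: eq_bigr => J _.
rewrite -ifB; case: ifP => // _.
by rewrite /esub sumrB revsum.
Qed.

Lemma X_eq j w : @Xelt F n j d w =
  \sum_I \sum_J (if [&& I :|: J == setT, [disjoint I & J], I != set0 & j \in J]
                 then fw w I J else 0).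
Proof. by []. Qed.

Lemma Y_eq j w : @Yelt F n j d w =
  \sum_I \sum_J (if [&& I :|: J == setT, [disjoint I & J], I != set0 & j \in J]
                 then fw w J I else 0).
Proof.
rewrite /Yelt; apply: eq_bigr => I _; apply: eq_bigr => J _.
by rewrite revsum.
Qed.

Lemma gen_ok (a b : 'I_n) : a != b -> ideal_gen [::] setT a b d [::].
Proof.
move=> ab; split; first exact: ab.
split; first by rewrite inE.
split; first by rewrite inE.
exists set0, set0; split; last by rewrite !set0U setU0.
split; try by rewrite /wordon /= !big_nil cards0 !eqxx.
all: by apply: eq_disjoint0 => x; rewrite inE.
Qed.

End Main.

Theorem mainTheorem19 (F : fieldType) (hF : [pchar F]%R =i pred0)
  (n : nat) (hn : (1 <= n)%N) (j k : 'I_n) (d : nat) :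
  in_ideal (esub (@Xelt F n j d) (@Xelt F n k d)) /\
  in_ideal (esub (@Yelt F n j d) (@Yelt F n k d)).
Proof.
case: (eqVneq j k) => [<-|jk].
  split; exists [::]; (split; [by [] | move=> w; rewrite /esub subrr big_nil //]).
split.
- exists [:: (1%R, [::], setT, k, j, d, [::])]; split.
    move=> t; rewrite inE => /eqP ->; have kj : k != j by rewrite eq_sym.
    by apply: gen_ok.
  move=> w; rewrite big_seq1 /escale mul1r emul_nil_r emul_nil_l /esub.
rewrite rel_eq (X_eq F d j w) (X_eq F d k w).
apply: (etrans (keyA (fw F d w) j k)).
refine (f_equal2 (fun a b : F => a - b) _ _); first reflexivity.
exact: (esym (swapS (fw F d w) k j)).
- exists [:: (1%R, [::], setT, j, k, d, [::])]; split.
    by move=> t; rewrite inE => /eqP ->; apply: gen_ok.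
  move=> w; rewrite big_seq1 /escale mul1r emul_nil_r emul_nil_l /esub.
rewrite rel_eq (Y_eq F d j w) (Y_eq F d k w).
apply: (etrans (keyA (fun I J => fw F d w J I) j k)).
refine (f_equal2 (fun a b : F => a - b) _ _); last reflexivity.
exact: (swapS (fw F d w) k j).
Qed.
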